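(* Let $\alpha,\beta>0$, $n\ge4$, and let $3\le j_1<\dots<j_r\le n-2$. For $1\le j\le n-2$ let $x_j$ be the event that box $(n-j-1,j)$ (on the third main diagonal) is non-empty. Then \[\mathbb{P}_{n,\alpha,\beta}(x_{j_1},\dots,x_{j_r},0_{n-1,1},\beta_{n,1})=\mathbb{P}_{n,\alpha,\beta}(x_{j_1},\dots,x_{j_r},\beta_{n-1,2}),\] where $0_{n-1,1}$ is the event that box $(n-1,1)$ is empty, $\beta_{n,1}$ the event that box $(n,1)$ contains $\beta$, and $\beta_{n-1,2}$ the event that box $(n-1,2)$ contains $\beta$.
   Context: A staircase tableau of size $n$ has boxes $(i,j)$ with $i,j\ge1$ and $i+j\le n+1$, rows numbered from the top and columns from the left. An $\alpha/\beta$-staircase tableau of size $n$ is a filling in which each box is empty or contains $\alpha$ or $\beta$, such that: all boxes in the same column and above an $\alpha$ are empty; all boxes in the same row and to the left of a $\beta$ are empty; every main-diagonal box (with $i+j=n+1$) contains a symbol. $\overline{\mathcal{S}}_n$ is the set of these. The weight is $wt(S)=\alpha^{N_\alpha}\beta^{N_\beta}$ ($N_\alpha,N_\beta$ the numbers of $\alpha$'s, $\beta$'s), and $\mathbb{P}_{n,\alpha,\beta}(S)=wt(S)/\sum_{T\in\overline{\mathcal{S}}_n}wt(T)$. $\mathbb{P}_{n,\alpha,\beta}(E_1,\dots,E_m)$ denotes the probability of the intersection of the events. *)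

(* Defs.v *)
From mathcomp Require Import all_boot all_order all_algebra.
Set Implicit Arguments. Unset Strict Implicit. Unset Printing Implicit Defensive.
Import Order.TTheory GRing.Theory Num.Theory.

(* Contents of a box: None = empty, Some true = alpha, Some false = beta. *)
Definition cell := option bool.
Definition c_alpha : cell := Some true.
Definition c_beta : cell := Some false.

(* A filling of size n: boxes are indexed 1-based by (i, j) in 'I_n.+1 * 'I_n.+1;
   row/column index 0 and positions with i + j > n + 1 lie outside the staircase
   and are required to be empty (so each staircase filling has a unique code). *)
Definition filling (n : nat) := {ffun 'I_n.+1 * 'I_n.+1 -> cell}.

Definition in_stair (n : nat) (b : 'I_n.+1 * 'I_n.+1) : bool :=
  [&& 0 < b.1, 0 < b.2 & b.1 + b.2 <= n.+1]%N.

Definition ab_staircase (n : nat) (S : filling n) : bool :=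
  [&& [forall b, ~~ in_stair b ==> (S b == None)],
      [forall i : 'I_n.+1, forall j : 'I_n.+1, forall i' : 'I_n.+1,
         ((S (i, j) == c_alpha) && (i' < i)%N) ==> (S (i', j) == None)],
      [forall i : 'I_n.+1, forall j : 'I_n.+1, forall j' : 'I_n.+1,
         ((S (i, j) == c_beta) && (j' < j)%N) ==> (S (i, j') == None)] &
      [forall b, (in_stair b && (b.1 + b.2 == n.+1)%N) ==> (S b != None)]].

Definition box (n : nat) (S : filling n) (i j : nat) : cell :=
  if (i <= n) && (j <= n) then S (inord i, inord j) else None.

Definition N_alpha n (S : filling n) : nat := #|[pred b | S b == c_alpha]|.
Definition N_beta n (S : filling n) : nat := #|[pred b | S b == c_beta]|.

Local Open Scope ring_scope.

Definition wt (R : pzRingType) (a b : R) n (S : filling n) : R :=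
  a ^+ N_alpha S * b ^+ N_beta S.

Definition Prob (R : fieldType) (n : nat) (a b : R) (E : pred (filling n)) : R :=
  (\sum_(S : filling n | ab_staircase S && E S) wt a b S) /
  (\sum_(S : filling n | ab_staircase S) wt a b S).

Definition ev_x (n : nat) (j : nat) : pred (filling n) :=
  fun S => box S (n - j - 1) j != None.
Arguments ev_x : clear implicits.
Definition ev_empty n (i j : nat) : pred (filling n) := fun S => box S i j == None.
Arguments ev_empty : clear implicits.
Definition ev_beta n (i j : nat) : pred (filling n) := fun S => box S i j == c_beta.
Arguments ev_beta : clear implicits.
Definition ev_all_x n (js : seq nat) : pred (filling n) :=
  fun S => all (fun j => ev_x n j S) js.
Arguments ev_all_x : clear implicits.

(* Main.v *)
Require Import Defs.
From mathcomp Require Import all_boot all_order all_algebra.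
From mathcomp Require Import zify.
Import Order.TTheory GRing.Theory Num.Theory.

Definition st n i j := [&& 0 < i, 0 < j & i + j <= n.+1].

Definition Pnat n (f : nat -> nat -> cell) : Prop :=
 [/\ forall i j, ~~ st n i j -> f i j = None,
     forall i j i', f i j = c_alpha -> i' < i -> f i' j = None,
     forall i j j', f i j = c_beta -> j' < j -> f i j' = None &
     forall i j, st n i j -> i + j = n.+1 -> f i j <> None].

Lemma Pnat_ext n f h : (forall i j, f i j = h i j) -> Pnat n f -> Pnat n h.
Proof.
move=> E [H1 H2 H3 H4]; split.
- by move=> i j ?; rewrite -E; apply: H1.
- by move=> i j i'; rewrite -!E; apply: H2.
- by move=> i j j'; rewrite -!E; apply: H3.
- by move=> i j; rewrite -E; apply: H4.
Qed.

Lemma abP n (S : filling n) : ab_staircase S <-> Pnat n (box S).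
Proof.
have boxE : forall b : 'I_n.+1 * 'I_n.+1, box S b.1 b.2 = S b.
  by case=> i j; rewrite /box !leq_ord /= !inord_val.
have boxO : forall i j, ~~ ((i <= n) && (j <= n)) -> box S i j = None.
  by rewrite /box => i j /negbTE ->.
have boxI : forall i j, i <= n -> j <= n -> box S i j = S (inord i, inord j).
  by rewrite /box => i j -> ->.
split.
- move=> /and4P[/forallP H1 /forallP H2 /forallP H3 /forallP H4]; split.
  + move=> i j Hs.
    case: (boolP ((i <= n) && (j <= n))) => [/andP[Hi Hj]|Hn]; last by rewrite boxO.
    rewrite boxI //; apply/eqP; apply: (implyP (H1 (inord i, inord j))).
    by rewrite /in_stair /= !inordK.
  + move=> i j i' Hij Hlt.
    case: (boolP ((i <= n) && (j <= n))) => [/andP[Hi Hj]|Hn]; last by rewrite boxO in Hij.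
    have Hi' : i' <= n by lia.
    apply/eqP.
    have := forallP (forallP (H2 (inord i)) (inord j)) (inord i').
    rewrite !inordK ?ltnS //.
    rewrite -!boxI // Hij eqxx Hlt /=.
    by [].
  + move=> i j j' Hij Hlt.
    case: (boolP ((i <= n) && (j <= n))) => [/andP[Hi Hj]|Hn]; last by rewrite boxO in Hij.
    have Hj' : j' <= n by lia.
    apply/eqP.
    have := forallP (forallP (H3 (inord i)) (inord j)) (inord j').
    rewrite !inordK ?ltnS //.
    rewrite -!boxI // Hij eqxx Hlt /=.
    by [].
  + move=> i j Hs Hd.
    have Hi : i <= n by move: Hs; rewrite /st; lia.
    have Hj : j <= n by move: Hs; rewrite /st; lia.
    rewrite boxI //; apply/eqP.
    apply: (implyP (H4 (inord i, inord j))).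
    by rewrite /in_stair /= !inordK ?ltnS // -/(st n i j) Hs /= Hd eqxx.
- move=> [H1 H2 H3 H4]; apply/and4P; split.
  + apply/forallP => b; apply/implyP => Hb; rewrite -boxE; apply/eqP; exact: H1.
  + apply/forallP=> i; apply/forallP=> j; apply/forallP=> i'.
    apply/implyP=> /andP[/eqP Hij Hlt]; apply/eqP.
    rewrite -(boxE (i', j)); apply: (H2 i j i') => //; by rewrite (boxE (i, j)).
  + apply/forallP=> i; apply/forallP=> j; apply/forallP=> j'.
    apply/implyP=> /andP[/eqP Hij Hlt]; apply/eqP.
    rewrite -(boxE (i, j')); apply: (H3 i j j') => //; by rewrite (boxE (i, j)).
  + apply/forallP => b; apply/implyP => /andP[Hb /eqP Hd].
    rewrite -boxE; apply/eqP; exact: H4.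
Qed.

Definition tn n (i j : nat) : nat * nat :=
 if (i <= n-2) && (j == 1) then (i, 2)
 else if (i <= n-2) && (j == 2) then (i,1)
 else if (i == n) && (j == 1) then (n-1, 2)
 else if (i == n-1) && (j == 2) then (n, 1)
 else (i,j).

Ltac tnsolve := rewrite /tn; repeat (case: ifP => ? /=); try (apply/pair_equal_spec; split); lia.

Lemma tnK n i j : 4 <= n -> tn n (tn n i j).1 (tn n i j).2 = (i,j).
Proof.
move=> H. rewrite [tn n i j]/tn.
(case: ifP => ? /=; [|case: ifP => ? /=; [|case: ifP => ? /=; [|case: ifP => ? /=]]]);
  tnsolve.
Qed.

Lemma tn_o n i j : j != 1 -> j != 2 -> tn n i j = (i,j).
Proof. move=> /negbTE h1 /negbTE h2; by rewrite /tn h1 h2 !andbF. Qed.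

Lemma tn_n1_1 n : 4 <= n -> tn n (n-1) 1 = (n-1,1). Proof. move=> H; tnsolve. Qed.
Lemma tn_n_1 n : 4 <= n -> tn n n 1 = (n-1,2). Proof. move=> H; tnsolve. Qed.
Lemma tn_n1_2 n : 4 <= n -> tn n (n-1) 2 = (n,1). Proof. move=> H; tnsolve. Qed.

Lemma tn_le n i j : 4 <= n ->
  ((tn n i j).1 <= n) && ((tn n i j).2 <= n) = (i <= n) && (j <= n).
Proof. move=> H; rewrite /tn; repeat (case: ifP => ? /=); apply/idP/idP; lia. Qed.

Lemma tn_st n i j : 4 <= n -> st n (tn n i j).1 (tn n i j).2 = st n i j.
Proof. move=> H; rewrite /st /tn; repeat (case: ifP => ? /=); apply/idP/idP; lia. Qed.

Lemma tn_diag n i j : 4 <= n -> ((tn n i j).1 + (tn n i j).2 == n.+1) = (i + j == n.+1).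
Proof. move=> H; rewrite /tn; repeat (case: ifP => ? /=); apply/idP/idP; lia. Qed.

Definition tauo n (b : 'I_n.+1 * 'I_n.+1) : 'I_n.+1 * 'I_n.+1 :=
  (inord (tn n b.1 b.2).1, inord (tn n b.1 b.2).2).

Lemma tauoK n : 4 <= n -> involutive (@tauo n).
Proof.
move=> H x; case: x => i j; rewrite /tauo /=.
have := tn_le n i j H; rewrite !leq_ord => /andP[h1 h2].
rewrite !inordK ?ltnS // tnK //= !inord_val //.
Qed.

Definition phi n (S : filling n) : filling n := [ffun b => S (tauo n b)].
Arguments phi {n}.

Lemma phiK n : 4 <= n -> involutive (@phi n).
Proof. move=> H S; apply/ffunP => b; by rewrite !ffunE tauoK. Qed.

Lemma box_phi n (S : filling n) i j : 4 <= n ->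
  box (phi S) i j = box S (tn n i j).1 (tn n i j).2.
Proof.
move=> H; rewrite /box tn_le //.
case: (boolP ((i <= n) && (j <= n))) => [/andP[Hi Hj]|Hn] //.
by rewrite ffunE /tauo /= !inordK ?ltnS.
Qed.

Lemma card_phi n (S : filling n) (c : cell) : 4 <= n ->
  #|[pred b | phi S b == c]| = #|[pred b | S b == c]|.
Proof.
move=> H; rewrite -!sum1_card [RHS](reindex_inj (inv_inj (tauoK n H))).
by apply: eq_bigl => b; rewrite !inE ffunE.
Qed.

Lemma wt_phi (R : pzRingType) (a b : R) n (S : filling n) : 4 <= n ->
  wt a b (phi S) = wt a b S.
Proof. by move=> H; rewrite /wt /N_alpha /N_beta !card_phi. Qed.

Lemma L1 n f : 4 <= n -> Pnat n f -> f (n-1) 1 = None -> f n 1 = c_beta ->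
  f (n-1) 2 = c_alpha -> Pnat n (fun i j => f (tn n i j).1 (tn n i j).2).
Proof.
move=> H [H1 H2 H3 H4] e1 e2 e3.
have e1' : forall i j, i = n-1 -> j = 1 -> f i j = None by move=> i j -> ->.
have e2' : forall i j, i = n -> j = 1 -> f i j = c_beta by move=> i j -> ->.
have c2' : forall i j, i < n-1 -> j = 2 -> f i j = None.
  by move=> i j Hi ->; apply: (H2 _ _ _ e3).
have stN' : forall i j, i = 0 \/ j = 0 \/ n.+1 < i + j -> f i j = None.
  move=> i j Hc; apply: H1; rewrite /st; apply/negP => /and3P[]; lia.
have H2' : forall i j i' j', f i j = c_alpha -> i' < i -> j' = j -> f i' j' = None.
  by move=> i j i' j' Hf Hl ->; apply: H2 Hf Hl.
have H3' : forall i j i' j', f i j = c_beta -> j' < j -> i' = i -> f i' j' = None.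
  by move=> i j i' j' Hf Hl ->; apply: H3 Hf Hl.
split.
- by move=> i j Hs; apply: H1; rewrite tn_st.
- move=> i j i' Hg Hlt; move: Hg; rewrite /tn; repeat (case: ifP => ? /=); move=> Hg;
  first [ lia
        | by apply: e1'; lia | by apply: c2'; lia | by apply: stN'; lia
        | by apply: (H2' _ _ _ _ Hg); lia
        | by move: Hg; rewrite c2'; [|lia|lia]
        | by move: Hg; rewrite e2'; [|lia|lia]
        | by move: Hg; rewrite e1'; [|lia|lia]
        | by move: Hg; rewrite stN'; [|lia] ].
- move=> i j j' Hg Hlt; move: Hg; rewrite /tn; repeat (case: ifP => ? /=); move=> Hg;
  first [ lia
        | by apply: e1'; lia | by apply: c2'; lia | by apply: stN'; lia
        | by apply: (H3' _ _ _ _ Hg); lia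
        | by move: Hg; rewrite c2'; [|lia|lia]
        | by move: Hg; rewrite e1'; [|lia|lia]
        | by move: Hg; rewrite e3; [|lia|lia]
        | by (have [E|E] : j' = 0 \/ j' = 1 by lia); [apply: stN'|apply: e1']; lia
        | by move: Hg; rewrite stN'; [|lia] ].
- move=> i j Hs Hd; apply: H4; first by rewrite tn_st.
  by apply/eqP; rewrite tn_diag // Hd.
Qed.

Lemma L2 n g : 4 <= n -> Pnat n g -> g (n-1) 2 = c_beta -> g n 1 = c_alpha ->
  Pnat n (fun i j => g (tn n i j).1 (tn n i j).2).
Proof.
move=> H [H1 H2 H3 H4] e3 e2.
have e2' : forall i j, i = n -> j = 1 -> g i j = c_alpha by move=> i j -> ->.
have e3' : forall i j, i = n-1 -> j = 2 -> g i j = c_beta by move=> i j -> ->.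
have c1' : forall i j, i < n -> j = 1 -> g i j = None.
  by move=> i j Hi ->; apply: (H2 _ _ _ e2).
have stN' : forall i j, i = 0 \/ j = 0 \/ n.+1 < i + j -> g i j = None.
  move=> i j Hc; apply: H1; rewrite /st; apply/negP => /and3P[]; lia.
have H2' : forall i j i' j', g i j = c_alpha -> i' < i -> j' = j -> g i' j' = None.
  by move=> i j i' j' Hf Hl ->; apply: H2 Hf Hl.
have H3' : forall i j i' j', g i j = c_beta -> j' < j -> i' = i -> g i' j' = None.
  by move=> i j i' j' Hf Hl ->; apply: H3 Hf Hl.
split.
- by move=> i j Hs; apply: H1; rewrite tn_st.
- move=> i j i' Hg Hlt; move: Hg; rewrite /tn; repeat (case: ifP => ? /=); move=> Hg;
  first [ lia
        | by apply: c1'; lia | by apply: stN'; lia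
        | by apply: (H2' _ _ _ _ Hg); lia
        | by move: Hg; rewrite c1'; [|lia|lia]
        | by move: Hg; rewrite e3'; [|lia|lia]
        | by move: Hg; rewrite e2'; [|lia|lia]
        | by move: Hg; rewrite stN'; [|lia]
        | by (have [E|E] : i' = 0 \/ 0 < i' by lia); [apply: stN'|apply: c1']; lia
        | by move: Hg; (have [E|E] : i < n \/ n < i by lia); [rewrite c1'|rewrite stN']; try lia ].
- move=> i j j' Hg Hlt; move: Hg; rewrite /tn; repeat (case: ifP => ? /=); move=> Hg;
  first [ lia
        | by apply: c1'; lia | by apply: stN'; lia
        | by apply: (H3' _ _ _ _ Hg); lia
        | by move: Hg; rewrite c1'; [|lia|lia]
        | by move: Hg; rewrite e2'; [|lia|lia]
        | by move: Hg; rewrite e3'; [|lia|lia]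
        | by move: Hg; rewrite stN'; [|lia]
        | by (have [E|E] : j' = 0 \/ j' = 1 by lia); [apply: stN'|apply: c1']; lia ].
- move=> i j Hs Hd; apply: H4; first by rewrite tn_st.
  by apply/eqP; rewrite tn_diag // Hd.
Qed.

Lemma ev_x_phi n (S : filling n) js : 4 <= n -> all (fun j => 3 <= j <= n - 2) js ->
  ev_all_x n js (phi S) = ev_all_x n js S.
Proof.
move=> H Hall; rewrite /ev_all_x; apply: eq_in_all => j /(allP Hall) Hj.
rewrite /ev_x box_phi // tn_o //; apply/eqP; lia.
Qed.

Lemma swap_eq n (S : filling n) js : 4 <= n -> all (fun j => 3 <= j <= n - 2) js ->
  (ab_staircase S && [&& ev_all_x n js S, ev_empty n (n - 1) 1 S & ev_beta n n 1 S])
     && (box S (n-1) 2 == c_alpha)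
  = (ab_staircase (phi S) && (ev_all_x n js (phi S) && ev_beta n (n - 1) 2 (phi S)))
     && (box (phi S) n 1 == c_alpha).
Proof.
move=> H Hall; rewrite ev_x_phi //.
have bp := fun i j => box_phi n S i j H.
have hE : forall i j, box (phi S) (tn n i j).1 (tn n i j).2 = box S i j.
  by move=> i j; rewrite bp tnK.
rewrite /ev_empty /ev_beta.
apply/idP/idP.
- move=> /andP[/andP[/abP Hab /and3P[X /eqP e1 /eqP e2]] /eqP e3].
  have Hg := L1 n _ H Hab e1 e2 e3.
  rewrite X /=; apply/andP; split; [apply/andP; split|].
  + apply/abP; apply: Pnat_ext Hg => i j; by rewrite bp.
  + by rewrite bp tn_n1_2 //= e2.
  + by rewrite bp tn_n_1 //= e3.
- move=> /andP[/andP[/abP Hab /andP[X /eqP e3]] /eqP e2].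
  have Hg := L2 n _ H Hab e3 e2.
  have e1 : box (phi S) (n-1) 1 = None.
    by case: Hab => _ _ H3 _; apply: H3 e3 _.
  rewrite X /=; apply/andP; split; [apply/andP; split|].
  + apply/abP; apply: Pnat_ext Hg => i j; exact: hE.
  + apply/andP; split.
    * by rewrite -(hE (n-1) 1) tn_n1_1 //= e1.
    * by rewrite -(hE n 1) tn_n_1 //= e3.
  + by rewrite -(hE (n-1) 2) tn_n1_2 //= e2.
Qed.

Lemma rest_eq n (S : filling n) js : 4 <= n ->
  (ab_staircase S && [&& ev_all_x n js S, ev_empty n (n - 1) 1 S & ev_beta n n 1 S])
     && ~~ (box S (n-1) 2 == c_alpha)
  = (ab_staircase S && (ev_all_x n js S && ev_beta n (n - 1) 2 S))
     && ~~ (box S n 1 == c_alpha).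
Proof.
move=> H; case Hab: (ab_staircase S) => //=.
move/abP: Hab => [H1 H2 H3 H4].
have d1 : box S (n-1) 2 <> None by apply: H4; rewrite /st; lia.
have d2 : box S n 1 <> None by apply: H4; rewrite /st; lia.
rewrite /ev_empty /ev_beta; case: (ev_all_x n js S) => //=.
case E1: (box S (n-1) 2) d1 => [[]|] // _; case E2: (box S n 1) d2 => [[]|] // _ /=;
  rewrite ?andbT ?andbF //.
by rewrite (H3 _ _ _ E1).
Qed.

Local Open Scope ring_scope.

Theorem lemma4p4 (R : realFieldType) (a b : R) (n : nat) (js : seq nat) :
  0 < a -> 0 < b -> (4 <= n)%N ->
  sorted ltn js -> all (fun j => (3 <= j <= n - 2)%N) js ->
  Prob a b (fun S => [&& ev_all_x n js S, ev_empty n (n - 1) 1 S & ev_beta n n 1 S])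
  = Prob a b (fun S => ev_all_x n js S && ev_beta n (n - 1) 2 S).
Proof.
move=> Ha Hb H Hs Hall; rewrite /Prob; congr (_ / _).
rewrite (bigID (fun S => box S (n-1) 2 == c_alpha))
        [RHS](bigID (fun S => box S n 1 == c_alpha)) /=.
congr (_ + _).
- rewrite [RHS](reindex_inj (inv_inj (phiK n H))).
  apply: eq_big => S; first exact: swap_eq.
  by move=> _; rewrite wt_phi.
- by apply: eq_bigl => S; apply: rest_eq.
Qed.
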